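(* Over $\mathsf{RCA}_0$, $\mathsf{EM}_\times$ and $\mathsf{fEM}_{<\infty}$ are equivalent.
   Context: $\mathbb{N}$ denotes the first-order universe; $[0,a]=\{0,\dots,a\}$. A coloring $c:[S]^2\to[0,a]$ is \emph{transitive} if for all $x<y<z$ in $S$ with $c(x,y)=c(y,z)$ we have $c(x,z)=c(x,y)$; it is \emph{fallow} if for all $x<y<z$ in $S$, $c(x,z)\in\{c(x,y),c(y,z)\}$. $\mathsf{EM}_\times$: whenever $\{c_i\}_{i\le a}$ is a finite sequence of colorings $c_i:[\mathbb{N}]^2\to\{0,1\}$, there is an infinite $S\subseteq\mathbb{N}$ such that every $c_i\upharpoonright[S]^2$ is transitive. $\mathsf{fEM}_{<\infty}$: for every $a$ and every $c:[\mathbb{N}]^2\to[0,a]$ there is an infinite $S\subseteq\mathbb{N}$ with $c\upharpoonright[S]^2$ fallow. *)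

(* Defs.v *)
(* Stdlib/vanilla world.  Semantic (Henkin-model) rendering of
   "over RCA_0, P and Q are equivalent": in every model of RCA_0
   (by Goedel completeness this is the same as RCA_0 |- P <-> Q). *)

Record L2structure := {
  Num : Type;
  SetT : Type;
  zero : Num;
  one : Num;
  add : Num -> Num -> Num;
  mul : Num -> Num -> Num;
  lt : Num -> Num -> Prop;
  mem : Num -> SetT -> Prop
}.

(** * Syntax of L2 formulas (number quantifiers only; free set parameters).
    Number variables and set variables are de Bruijn indices. *)
Inductive term : Type :=
| tvar (n : nat)
| tzero
| tone
| tplus (a b : term)
| ttimes (a b : term).

Inductive form : Type :=
| feq (a b : term)
| flt (a b : term)
| fmem (a : term) (k : nat)
| fnot (f : form)
| fand (f g : form)
| f_or (f g : form)
| fimp (f g : form)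
| fall (f : form)
| fex (f : form)
| fball (t : term) (f : form)          (* forall n < t, f  (t in outer context) *)
| fbex (t : term) (f : form).

Definition scons {A : Type} (x : A) (e : nat -> A) : nat -> A :=
  fun n => match n with O => x | S m => e m end.

Section Sem.
Variable M : L2structure.

Fixpoint evalt (e : nat -> Num M) (t : term) : Num M :=
  match t with
  | tvar n => e n
  | tzero => zero M
  | tone => one M
  | tplus a b => add M (evalt e a) (evalt e b)
  | ttimes a b => mul M (evalt e a) (evalt e b)
  end.

Fixpoint sat (e : nat -> Num M) (E : nat -> SetT M) (f : form) : Prop :=
  match f with
  | feq a b => evalt e a = evalt e b
  | flt a b => lt M (evalt e a) (evalt e b)
  | fmem a k => mem M (evalt e a) (E k)
  | fnot f => ~ sat e E f
  | fand f g => sat e E f /\ sat e E g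
  | f_or f g => sat e E f \/ sat e E g
  | fimp f g => sat e E f -> sat e E g
  | fall f => forall x, sat (scons x e) E f
  | fex f => exists x, sat (scons x e) E f
  | fball t f => forall x, lt M x (evalt e t) -> sat (scons x e) E f
  | fbex t f => exists x, lt M x (evalt e t) /\ sat (scons x e) E f
  end.

End Sem.

Inductive Bounded : form -> Prop :=
| B_eq a b : Bounded (feq a b)
| B_lt a b : Bounded (flt a b)
| B_mem a k : Bounded (fmem a k)
| B_not f : Bounded f -> Bounded (fnot f)
| B_and f g : Bounded f -> Bounded g -> Bounded (fand f g)
| B_or f g : Bounded f -> Bounded g -> Bounded (f_or f g)
| B_imp f g : Bounded f -> Bounded g -> Bounded (fimp f g)
| B_ball t f : Bounded f -> Bounded (fball t f)
| B_bex t f : Bounded f -> Bounded (fbex t f).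

Definition Sigma01 (f : form) : Prop :=
  Bounded f \/ exists g, f = fex g /\ Bounded g.

Definition BasicAxioms (M : L2structure) : Prop :=
  (forall n : Num M, add M n (one M) <> zero M) /\
  (forall m n : Num M, add M m (one M) = add M n (one M) -> m = n) /\
  (forall m : Num M, add M m (zero M) = m) /\
  (forall m n : Num M, add M m (add M n (one M)) = add M (add M m n) (one M)) /\
  (forall m : Num M, mul M m (zero M) = zero M) /\
  (forall m n : Num M, mul M m (add M n (one M)) = add M (mul M m n) m) /\
  (forall m : Num M, ~ lt M m (zero M)) /\
  (forall m n : Num M, lt M m (add M n (one M)) <-> (lt M m n \/ m = n)).

(** Sigma^0_1 induction (variable 0 is the induction variable;
    e, E supply number and set parameters). *)
Definition Sigma01Induction (M : L2structure) : Prop :=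
  forall f, Sigma01 f ->
  forall (e : nat -> Num M) (E : nat -> SetT M),
    sat M (scons (zero M) e) E f ->
    (forall n, sat M (scons n e) E f -> sat M (scons (add M n (one M)) e) E f) ->
    forall n, sat M (scons n e) E f.

(** Delta^0_1 comprehension: phi Sigma^0_1, psi Pi^0_1 (= negation of a
    Sigma^0_1 formula g). *)
Definition Delta01Comprehension (M : L2structure) : Prop :=
  forall f g, Sigma01 f -> Sigma01 g ->
  forall (e : nat -> Num M) (E : nat -> SetT M),
    (forall n, sat M (scons n e) E f <-> ~ sat M (scons n e) E g) ->
    exists X : SetT M, forall n, mem M n X <-> sat M (scons n e) E f.

Definition RCA0model (M : L2structure) : Prop :=
  BasicAxioms M /\ Sigma01Induction M /\ Delta01Comprehension M.

Section Coding.
Variable M : L2structure.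

Definition le (x y : Num M) : Prop := lt M x y \/ x = y.

Definition pair (i j : Num M) : Num M :=
  add M (mul M (add M i j) (add M i j)) i.

Definition Infinite (X : SetT M) : Prop :=
  forall n, exists m, lt M n m /\ mem M m X.

(* F codes a coloring c : [N]^2 -> [0,a], c(x,y) = v iff ((x,y),v) \in F *)
Definition IsColoring (a : Num M) (F : SetT M) : Prop :=
  (forall x y, lt M x y -> exists v, le v a /\ mem M (pair (pair x y) v) F) /\
  (forall x y v w, lt M x y -> mem M (pair (pair x y) v) F ->
      mem M (pair (pair x y) w) F -> v = w).

Definition colval (F : SetT M) (x y v : Num M) : Prop :=
  mem M (pair (pair x y) v) F.

(* F codes a finite sequence (c_i)_{i <= a} of colorings c_i : [N]^2 -> {0,1},
   c_i(x,y) = v iff ((i,(x,y)),v) \in F *)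
Definition IsColoringSeq (a : Num M) (F : SetT M) : Prop :=
  forall i, le i a ->
  (forall x y, lt M x y -> exists v, le v (one M) /\
       mem M (pair (pair i (pair x y)) v) F) /\
  (forall x y v w, lt M x y -> mem M (pair (pair i (pair x y)) v) F ->
      mem M (pair (pair i (pair x y)) w) F -> v = w).

Definition seqval (F : SetT M) (i x y v : Num M) : Prop :=
  mem M (pair (pair i (pair x y)) v) F.

Definition TransitiveOn (c : Num M -> Num M -> Num M -> Prop) (X : SetT M) : Prop :=
  forall x y z u, mem M x X -> mem M y X -> mem M z X ->
    lt M x y -> lt M y z -> c x y u -> c y z u -> c x z u.

Definition FallowOn (c : Num M -> Num M -> Num M -> Prop) (X : SetT M) : Prop :=
  forall x y z u v w, mem M x X -> mem M y X -> mem M z X ->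
    lt M x y -> lt M y z -> c x y u -> c y z v -> c x z w -> w = u \/ w = v.

Definition EMx : Prop :=
  forall (a : Num M) (F : SetT M), IsColoringSeq a F ->
    exists X : SetT M, Infinite X /\
      forall i, le i a -> TransitiveOn (seqval F i) X.

Definition fEMfin : Prop :=
  forall (a : Num M) (F : SetT M), IsColoring a F ->
    exists X : SetT M, Infinite X /\ FallowOn (colval F) X.

End Coding.

(* Main.v *)
Require Import Defs.
From Stdlib Require Import Classical ClassicalEpsilon Setoid Morphisms Ring.

Fixpoint ren_t (r : nat -> nat) (t : term) : term :=
  match t with
  | tvar n => tvar (r n)
  | tzero => tzero
  | tone => tone
  | tplus a b => tplus (ren_t r a) (ren_t r b)
  | ttimes a b => ttimes (ren_t r a) (ren_t r b)
  end.

Definition upr (r : nat -> nat) : nat -> nat :=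
  fun n => match n with O => O | S m => S (r m) end.

Fixpoint ren_f (r : nat -> nat) (f : form) : form :=
  match f with
  | feq a b => feq (ren_t r a) (ren_t r b)
  | flt a b => flt (ren_t r a) (ren_t r b)
  | fmem a k => fmem (ren_t r a) k
  | fnot f => fnot (ren_f r f)
  | fand f g => fand (ren_f r f) (ren_f r g)
  | f_or f g => f_or (ren_f r f) (ren_f r g)
  | fimp f g => fimp (ren_f r f) (ren_f r g)
  | fall f => fall (ren_f (upr r) f)
  | fex f => fex (ren_f (upr r) f)
  | fball t f => fball (ren_t r t) (ren_f (upr r) f)
  | fbex t f => fbex (ren_t r t) (ren_f (upr r) f)
  end.

Lemma Bounded_ren r f : Bounded f -> Bounded (ren_f r f).
Proof. intro H; revert r; induction H; intro r; simpl; constructor; auto. Qed.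

Section Infra.
Variable M : L2structure.

Lemma evalt_ext (e e' : nat -> Num M) t : (forall n, e n = e' n) -> evalt M e t = evalt M e' t.
Proof. intro H; induction t; simpl; congruence. Qed.

Lemma evalt_ren (e : nat -> Num M) r t : evalt M e (ren_t r t) = evalt M (fun n => e (r n)) t.
Proof. induction t; simpl; congruence. Qed.

Lemma sat_ext f : forall (e e' : nat -> Num M) E, (forall n, e n = e' n) -> (sat M e E f <-> sat M e' E f).
Proof.
  induction f; intros e e' E H; simpl;
  try (rewrite (evalt_ext e e' a H));
  try (rewrite (evalt_ext e e' b H));
  try (rewrite (evalt_ext e e' t H));
  try (reflexivity).
  - rewrite (IHf e e' E H); tauto.
  - rewrite (IHf1 e e' E H), (IHf2 e e' E H); tauto.
  - rewrite (IHf1 e e' E H), (IHf2 e e' E H); tauto.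
  - rewrite (IHf1 e e' E H), (IHf2 e e' E H); tauto.
  - split; intros H1 x; [rewrite <- (IHf (scons x e) (scons x e'))|rewrite (IHf (scons x e) (scons x e'))]; auto; intros [|n]; simpl; auto.
  - split; intros [x H1]; exists x; [rewrite <- (IHf (scons x e) (scons x e'))|rewrite (IHf (scons x e) (scons x e'))]; auto; intros [|n]; simpl; auto.
  - split; intros H1 x Hx; [rewrite <- (IHf (scons x e) (scons x e'))|rewrite (IHf (scons x e) (scons x e'))]; auto; intros [|n]; simpl; auto.
  - split; intros [x [Hx H1]]; exists x; split; auto; [rewrite <- (IHf (scons x e) (scons x e'))|rewrite (IHf (scons x e) (scons x e'))]; auto; intros [|n]; simpl; auto.
Qed.

Lemma sat_ren f : forall r (e : nat -> Num M) E, sat M e E (ren_f r f) <-> sat M (fun n => e (r n)) E f.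
Proof.
  induction f; intros r e E; simpl; try rewrite !evalt_ren; try reflexivity.
  - rewrite IHf; tauto.
  - rewrite IHf1, IHf2; tauto.
  - rewrite IHf1, IHf2; tauto.
  - rewrite IHf1, IHf2; tauto.
  - split; intros H x; specialize (H x); rewrite IHf in *;
    (eapply sat_ext; [|exact H]); intros [|n]; reflexivity.
  - split; intros [x H]; exists x; rewrite IHf in *;
    (eapply sat_ext; [|exact H]); intros [|n]; reflexivity.
  - split; intros H x Hx; specialize (H x Hx); rewrite IHf in *;
    (eapply sat_ext; [|exact H]); intros [|n]; reflexivity.
  - split; intros [x [Hx H]]; exists x; split; auto; rewrite IHf in *;
    (eapply sat_ext; [|exact H]); intros [|n]; reflexivity.
Qed.

Definition sh := ren_t S.
Lemma evalt_sh (x : Num M) e t : evalt M (scons x e) (sh t) = evalt M e t.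
Proof. unfold sh. rewrite evalt_ren. apply evalt_ext. intro; reflexivity. Qed.
End Infra.
Arguments sh : simpl never.
Definition fle (a b : term) := f_or (flt a b) (feq a b).


Section Arith.
Variable M : L2structure.
Hypothesis HB : BasicAxioms M.
Hypothesis HI : Sigma01Induction M.
Hypothesis HC : Delta01Comprehension M.
Variable s0 : SetT M.

Local Notation N := (Num M).
Local Notation z0 := (zero M).
Local Notation o1 := (one M).
Local Notation "a +' b" := (add M a b) (at level 50, left associativity).
Local Notation "a *' b" := (mul M a b) (at level 40, left associativity).
Local Notation "a <' b" := (lt M a b) (at level 70).
Local Notation "a <=' b" := (le M a b) (at level 70).

Lemma A1 n : n +' o1 <> z0. Proof. apply HB. Qed.
Lemma A2 m n : m +' o1 = n +' o1 -> m = n. Proof. apply HB. Qed.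
Lemma A3 m : m +' z0 = m. Proof. apply HB. Qed.
Lemma A4 m n : m +' (n +' o1) = (m +' n) +' o1. Proof. apply HB. Qed.
Lemma A5 m : m *' z0 = z0. Proof. apply HB. Qed.
Lemma A6 m n : m *' (n +' o1) = m *' n +' m. Proof. apply HB. Qed.
Lemma A7 m : ~ m <' z0. Proof. apply HB. Qed.
Lemma A8 m n : m <' n +' o1 <-> m <' n \/ m = n. Proof. apply HB. Qed.

Lemma ind_S f (Hf : Sigma01 f) (e : nat -> N) (E : nat -> SetT M) (P : N -> Prop) :
  (forall n, sat M (scons n e) E f <-> P n) -> P z0 -> (forall n, P n -> P (n +' o1)) -> forall n, P n.
Proof.
  intros HP H0 HS n. apply HP. apply (HI f Hf e E).
  - apply HP; exact H0.
  - intros m Hm. apply HP. apply HS. apply HP. exact Hm.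
Qed.

Definition e0 : nat -> N := fun _ => z0.
Definition E0 : nat -> SetT M := fun _ => s0.

Ltac satsimp := simpl.
Ltac bnd := repeat constructor.

Ltac induct f env :=
  refine (ind_S f _ env E0 _ _ _ _);
  [ try solve [left; bnd | right; eexists; split; [reflexivity|bnd]]
  | let n := fresh "n" in intro n; satsimp; try tauto
  | | ].

Lemma add_0_l n : z0 +' n = n.
Proof.
  revert n; induct (feq (tplus tzero (tvar 0)) (tvar 0)) e0.
  - apply A3.
  - intros n H. rewrite A4, H. reflexivity.
Qed.


Lemma add_S_l m n : (m +' o1) +' n = (m +' n) +' o1.
Proof.
  revert n; induct (feq (tplus (tplus (tvar 1) tone) (tvar 0)) (tplus (tplus (tvar 1) (tvar 0)) tone)) (scons m e0).
  - rewrite !A3; reflexivity.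
  - intros n H. rewrite !A4, H. reflexivity.
Qed.

Lemma add_comm m n : m +' n = n +' m.
Proof.
  revert n; induct (feq (tplus (tvar 1) (tvar 0)) (tplus (tvar 0) (tvar 1))) (scons m e0).
  - rewrite A3, add_0_l; reflexivity.
  - intros n H. rewrite A4, H, add_S_l. reflexivity.
Qed.

Lemma add_assoc m n p : m +' n +' p = m +' (n +' p).
Proof.
  revert p; induct (feq (tplus (tplus (tvar 1) (tvar 2)) (tvar 0)) (tplus (tvar 1) (tplus (tvar 2) (tvar 0)))) (scons m (scons n e0)).
  - rewrite !A3; reflexivity.
  - intros p H. rewrite !A4, H. reflexivity.
Qed.

Lemma mul_0_l n : z0 *' n = z0.
Proof.
  revert n; induct (feq (ttimes tzero (tvar 0)) tzero) e0.
  - apply A5.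
  - intros n H. rewrite A6, H, A3. reflexivity.
Qed.

Lemma mul_S_l m n : (m +' o1) *' n = m *' n +' n.
Proof.
  revert n; induct (feq (ttimes (tplus (tvar 1) tone) (tvar 0)) (tplus (ttimes (tvar 1) (tvar 0)) (tvar 0))) (scons m e0).
  - rewrite !A5, A3; reflexivity.
  - intros n H. rewrite !A6, H, !add_assoc. f_equal.
    rewrite !A4, (add_comm n m). reflexivity.
Qed.

Lemma mul_comm m n : m *' n = n *' m.
Proof.
  revert n; induct (feq (ttimes (tvar 1) (tvar 0)) (ttimes (tvar 0) (tvar 1))) (scons m e0).
  - rewrite A5, mul_0_l; reflexivity.
  - intros n H. rewrite A6, H, mul_S_l. reflexivity.
Qed.

Lemma mul_distr_r m n p : (m +' n) *' p = m *' p +' n *' p.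
Proof.
  revert p; induct (feq (ttimes (tplus (tvar 1) (tvar 2)) (tvar 0)) (tplus (ttimes (tvar 1) (tvar 0)) (ttimes (tvar 2) (tvar 0)))) (scons m (scons n e0)).
  - rewrite !A5, A3; reflexivity.
  - intros p H. rewrite !A6, H. rewrite !add_assoc. f_equal.
    rewrite <- !add_assoc. f_equal. apply add_comm.
Qed.

Lemma mul_assoc m n p : m *' n *' p = m *' (n *' p).
Proof.
  revert p; induct (feq (ttimes (ttimes (tvar 1) (tvar 2)) (tvar 0)) (ttimes (tvar 1) (ttimes (tvar 2) (tvar 0)))) (scons m (scons n e0)).
  - rewrite !A5; reflexivity.
  - intros p H. rewrite !A6, H. rewrite (mul_comm m (n *' p +' n)), mul_distr_r.
    rewrite (mul_comm (n *' p) m), (mul_comm n m). reflexivity.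
Qed.

Lemma mul_1_l n : o1 *' n = n.
Proof.
  rewrite <- (add_0_l o1), mul_S_l, mul_0_l, add_0_l. reflexivity.
Qed.

Definition Nsrt : Ring_theory.semi_ring_theory z0 o1 (add M) (mul M) (@eq N).
Proof.
  constructor.
  - exact add_0_l.
  - exact add_comm.
  - intros; symmetry; apply add_assoc.
  - exact mul_1_l.
  - exact mul_0_l.
  - exact mul_comm.
  - intros; symmetry; apply mul_assoc.
  - exact mul_distr_r.
Qed.

Add Ring Nring : Nsrt.


Lemma lt_S n : n <' n +' o1.
Proof. apply A8; right; reflexivity. Qed.

Lemma zero_or_S n : n = z0 \/ exists p, n = p +' o1.
Proof.
  revert n; induct (f_or (feq (tvar 0) tzero) (fbex (tvar 0) (feq (tvar 1) (tplus (tvar 0) tone)))) e0.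
  - split; [intros [H|[x [_ H]]]; [left|right; exists x]; auto|intros [H|[x H]]; [left; auto|right; exists x; split; auto]].
    rewrite H; apply lt_S.
  - left; reflexivity.
  - intros n _; right; exists n; reflexivity.
Qed.

Lemma le_0 n : z0 <=' n.
Proof.
  unfold le. revert n; induct (f_or (flt tzero (tvar 0)) (feq tzero (tvar 0))) e0.
  - right; reflexivity.
  - intros n [H|H]; left; apply A8; auto.
Qed.

Lemma lt_trans x y z : x <' y -> y <' z -> x <' z.
Proof.
  revert z; induct (fimp (flt (tvar 1) (tvar 2)) (fimp (flt (tvar 2) (tvar 0)) (flt (tvar 1) (tvar 0)))) (scons x (scons y e0)).
  - intros _ H; exfalso; eapply A7; eauto.
  - intros z IH H1 H2. apply A8 in H2. apply A8. destruct H2 as [H2|H2].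
    + left; auto.
    + subst; left; auto.
Qed.

Lemma lt_irrefl n : ~ n <' n.
Proof.
  revert n; induct (fnot (flt (tvar 0) (tvar 0))) e0.
  - apply A7.
  - intros n IH H. apply A8 in H. destruct H as [H|H].
    + apply IH. eapply lt_trans; [apply lt_S|exact H].
    + apply IH. rewrite <- H at 2. apply lt_S.
Qed.

Lemma lt_S_mono m n : m <' n -> m +' o1 <' n +' o1.
Proof.
  revert n; induct (fimp (flt (tvar 1) (tvar 0)) (flt (tplus (tvar 1) tone) (tplus (tvar 0) tone))) (scons m e0).
  - intro H; exfalso; eapply A7; eauto.
  - intros n IH H. apply A8 in H. destruct H as [H|H].
    + eapply lt_trans; [apply IH; auto|apply lt_S].
    + subst; apply lt_S.
Qed.

Lemma lt_S_rev m n : m +' o1 <' n +' o1 -> m <' n.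
Proof.
  intro H; apply A8 in H; destruct H as [H|H].
  - eapply lt_trans; [apply lt_S|exact H].
  - rewrite <- H; apply lt_S.
Qed.

Lemma trich m n : m <' n \/ m = n \/ n <' m.
Proof.
  revert n; induct (f_or (flt (tvar 1) (tvar 0)) (f_or (feq (tvar 1) (tvar 0)) (flt (tvar 0) (tvar 1)))) (scons m e0).
  - destruct (le_0 m) as [H|H]; auto.
  - intros n [H|[H|H]].
    + left; apply A8; auto.
    + left; apply A8; auto.
    + apply lt_S_mono in H. apply A8 in H. destruct H as [H|H]; auto.
Qed.

Lemma lt_le_S m n : m <' n -> m +' o1 <=' n.
Proof. intro H; apply lt_S_mono in H; apply A8 in H; exact H. Qed.

Lemma le_lt_S m n : m <=' n -> m <' n +' o1.
Proof. intro H; apply A8; exact H. Qed.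

Lemma lt_S_le m n : m <' n +' o1 -> m <=' n.
Proof. intro H; apply A8; exact H. Qed.

Lemma le_refl n : n <=' n. Proof. right; reflexivity. Qed.

Lemma le_trans x y z : x <=' y -> y <=' z -> x <=' z.
Proof.
  intros [H1|H1] [H2|H2]; subst; try (right; reflexivity); left; auto. eapply lt_trans; eauto.
Qed.

Lemma lt_le_trans x y z : x <' y -> y <=' z -> x <' z.
Proof. intros H1 [H2|H2]; subst; auto. eapply lt_trans; eauto. Qed.

Lemma le_lt_trans x y z : x <=' y -> y <' z -> x <' z.
Proof. intros [H1|H1] H2; subst; auto. eapply lt_trans; eauto. Qed.

Lemma le_antisym x y : x <=' y -> y <=' x -> x = y.
Proof.
  intros [H1|H1] [H2|H2]; auto. exfalso; apply (lt_irrefl x); eapply lt_trans; eauto.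
Qed.

Lemma lt_nle x y : x <' y -> ~ y <=' x.
Proof. intros H1 H2. apply (lt_irrefl x). eapply lt_le_trans; eauto. Qed.

Lemma nlt_le x y : ~ x <' y -> y <=' x.
Proof. intro H. destruct (trich x y) as [H1|[H1|H1]]; [tauto|right; auto|left; auto]. Qed.

Lemma le_add n p : n <=' n +' p.
Proof.
  unfold le; revert p; induct (f_or (flt (tvar 1) (tplus (tvar 1) (tvar 0))) (feq (tvar 1) (tplus (tvar 1) (tvar 0)))) (scons n e0).
  - right; rewrite A3; reflexivity.
  - intros p H. left. rewrite A4. apply le_lt_S; auto.
Qed.

Lemma sub_ex m n : m <=' n -> exists d, n = m +' d.
Proof.
  unfold le; revert n; induct (fimp (f_or (flt (tvar 1) (tvar 0)) (feq (tvar 1) (tvar 0))) (fbex (tplus (tvar 0) tone) (feq (tvar 1) (tplus (tvar 2) (tvar 0))))) (scons m e0).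
  - split; intros H H1; destruct (H H1) as [d Hd]; [exists d; tauto|exists d; split; auto].
    rewrite Hd. apply le_lt_S. rewrite add_comm. apply le_add.
  - intros [H|H]; [exfalso; eapply A7; eauto|]. exists z0; rewrite A3; auto.
  - intros n IH [H|H]; [apply A8 in H; destruct H as [H|H]|].
    + destruct (IH (or_introl H)) as [d Hd]. exists (d +' o1). rewrite A4, Hd; reflexivity.
    + exists o1. subst; reflexivity.
    + exists z0. rewrite A3; auto.
Qed.

Lemma lt_ex m n : m <' n <-> exists d, n = m +' d +' o1.
Proof.
  split.
  - intro H. apply lt_le_S in H. apply sub_ex in H. destruct H as [d Hd]. exists d. rewrite Hd. ring.
  - intros [d Hd]. subst. apply le_lt_S. apply le_add.
Qed.

Lemma lt_add_r m n p : m <' n -> m +' p <' n +' p.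
Proof.
  intro H. apply lt_ex in H. destruct H as [d Hd]. subst. apply lt_ex. exists d. ring.
Qed.

Lemma lt_add_l m n p : m <' n -> p +' m <' p +' n.
Proof. intro H. rewrite (add_comm p m), (add_comm p n). apply lt_add_r; auto. Qed.

Lemma le_add_r m n p : m <=' n -> m +' p <=' n +' p.
Proof. intros [H|H]; [left; apply lt_add_r; auto|right; subst; auto]. Qed.

Lemma le_add_l m n p : m <=' n -> p +' m <=' p +' n.
Proof. intros [H|H]; [left; apply lt_add_l; auto|right; subst; auto]. Qed.

Lemma add_cancel_r m n p : m +' p = n +' p -> m = n.
Proof.
  intro H. destruct (trich m n) as [H1|[H1|H1]]; auto; exfalso.
  - apply (lt_add_r _ _ p) in H1. rewrite H in H1. eapply lt_irrefl; eauto.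
  - apply (lt_add_r _ _ p) in H1. rewrite H in H1. eapply lt_irrefl; eauto.
Qed.

Lemma add_cancel_l m n p : p +' m = p +' n -> m = n.
Proof. rewrite (add_comm p m), (add_comm p n). apply add_cancel_r. Qed.

Lemma lt_add_rev m n p : m +' p <' n +' p -> m <' n.
Proof.
  intro H. destruct (trich m n) as [H1|[H1|H1]]; auto; exfalso.
  - subst. eapply lt_irrefl; eauto.
  - apply (lt_add_r _ _ p) in H1. apply (lt_irrefl (m +' p)). eapply lt_trans; eauto.
Qed.

Lemma le_add_rev m n p : m +' p <=' n +' p -> m <=' n.
Proof. intros [H|H]; [left; eapply lt_add_rev; eauto|right; eapply add_cancel_r; eauto]. Qed.

Lemma lt_0_S n : z0 <' n +' o1.
Proof. apply le_lt_S, le_0. Qed.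

Lemma pos_S n : z0 <' n -> exists p, n = p +' o1.
Proof. intro H. destruct (zero_or_S n) as [H1|H1]; auto. subst. exfalso; eapply lt_irrefl; eauto. Qed.

Lemma lt_mul_r m n p : m <' n -> z0 <' p -> m *' p <' n *' p.
Proof.
  intros H Hp. apply lt_ex in H. destruct H as [d Hd]. subst. apply pos_S in Hp. destruct Hp as [q Hq]. subst.
  apply lt_ex. exists (d *' (q +' o1) +' q). ring.
Qed.

Lemma le_mul_r m n p : m <=' n -> m *' p <=' n *' p.
Proof.
  intros H. apply sub_ex in H. destruct H as [d Hd]. subst. rewrite mul_distr_r. apply le_add.
Qed.

Lemma mul_cancel_r m n p : m *' p = n *' p -> z0 <' p -> m = n.
Proof.
  intros H Hp. destruct (trich m n) as [H1|[H1|H1]]; auto; exfalso.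
  - apply (lt_mul_r _ _ p) in H1; auto. rewrite H in H1. eapply lt_irrefl; eauto.
  - apply (lt_mul_r _ _ p) in H1; auto. rewrite H in H1. eapply lt_irrefl; eauto.
Qed.

Lemma lt_mul_rev m n p : m *' p <' n *' p -> m <' n.
Proof.
  intro H. destruct (trich m n) as [H1|[H1|H1]]; auto; exfalso.
  - subst. eapply lt_irrefl; eauto.
  - apply (lt_nle _ _ H). apply le_mul_r. left; auto.
Qed.

Lemma le_mul_rev m n p : m *' p <=' n *' p -> z0 <' p -> m <=' n.
Proof. intros [H|H] Hp; [left; eapply lt_mul_rev; eauto|right; eapply mul_cancel_r; eauto]. Qed.

Lemma one_neq_zero : o1 <> z0.
Proof. intro H. apply (A1 z0). rewrite add_0_l. exact H. Qed.

Lemma lt_0_1 : z0 <' o1.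
Proof. rewrite <- (add_0_l o1). apply lt_0_S. Qed.

Lemma le_1_cases v : v <=' o1 -> v = z0 \/ v = o1.
Proof.
  intros [H|H]; auto. left. rewrite <- (add_0_l o1) in H. apply A8 in H. destruct H as [H|H]; auto.
  exfalso; eapply A7; eauto.
Qed.


Lemma strong_ind f (Hf : Bounded f) (e : nat -> N) (E : nat -> SetT M) (P : N -> Prop) :
  (forall n, sat M (scons n e) E f <-> P n) ->
  (forall n, (forall m, m <' n -> P m) -> P n) -> forall n, P n.
Proof.
  intros HP Hs.
  assert (H : forall n, forall m, m <' n -> P m).
  { refine (ind_S (fball (tvar 0) (ren_f (upr S) f)) _ e E _ _ _ _).
    - left; constructor; apply Bounded_ren; auto.
    - intro n; simpl. split; intros H m Hm; specialize (H m Hm).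
      + apply HP. rewrite sat_ren in H. eapply sat_ext; [|exact H]. intros [|k]; reflexivity.
      + rewrite sat_ren. apply HP in H. eapply sat_ext; [|exact H]. intros [|k]; reflexivity.
    - intros m Hm; exfalso; eapply A7; eauto.
    - intros n IH m Hm. apply A8 in Hm. destruct Hm as [Hm|Hm]; auto. subst. apply Hs; auto. }
  intro n. apply (H (n +' o1)). apply lt_S.
Qed.

Lemma lnp f (Hf : Bounded f) (e : nat -> N) (E : nat -> SetT M) (P : N -> Prop) :
  (forall n, sat M (scons n e) E f <-> P n) ->
  (exists n, P n) -> exists n, P n /\ forall m, m <' n -> ~ P m.
Proof.
  intros HP [n Hn]. apply NNPP. intro Hno.
  assert (H : forall n, ~ P n).
  { refine (strong_ind (fnot f) _ e E _ _ _).
    - constructor; auto.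
    - intro k; simpl. rewrite HP. tauto.
    - intros k Hk Pk. apply Hno. exists k. split; auto. }
  apply (H n); auto.
Qed.

Ltac sinduct f env :=
  refine (strong_ind f _ env E0 _ _ _);
  [ try bnd
  | let n := fresh "n" in intro n; satsimp; try tauto
  | ].

Definition even x := exists h, x = h +' h.
Definition odd x := exists h, x = h +' h +' o1.

Lemma parity n : even n \/ odd n.
Proof.
  assert (H : forall n, exists h, h <' n +' o1 /\ (n = h +' h \/ n = h +' h +' o1)).
  { induct (fbex (tplus (tvar 0) tone) (f_or (feq (tvar 1) (tplus (tvar 0) (tvar 0))) (feq (tvar 1) (tplus (tplus (tvar 0) (tvar 0)) tone)))) e0.
    - exists z0. split; [apply lt_0_S|left; rewrite A3; reflexivity].
    - intros k [h [Hh [H|H]]].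
      + exists h. split; [eapply lt_trans; [exact Hh|apply lt_S]|right; rewrite H; reflexivity].
      + exists (h +' o1). split; [apply lt_S_mono; auto|left; rewrite H; ring]. }
  destruct (H n) as [h [_ [Hh|Hh]]]; [left|right]; exists h; auto.
Qed.

Lemma double_inj h k : h +' h = k +' k -> h = k.
Proof.
  intro H. destruct (trich h k) as [H1|[H1|H1]]; auto; exfalso.
  - assert (h +' h <' k +' k). { eapply lt_trans; [apply lt_add_r; eauto|apply lt_add_l; eauto]. }
    rewrite H in H0; eapply lt_irrefl; eauto.
  - assert (k +' k <' h +' h). { eapply lt_trans; [apply lt_add_r; eauto|apply lt_add_l; eauto]. }
    rewrite H in H0; eapply lt_irrefl; eauto.
Qed.

Lemma nle_lt x y : ~ x <=' y -> y <' x.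
Proof. intro H. destruct (trich x y) as [H1|[H1|H1]]; auto; exfalso; apply H; [left|right]; auto. Qed.

Lemma lt_neq x y : x <' y -> x <> y.
Proof. intros H1 H2; subst; eapply lt_irrefl; eauto. Qed.

Lemma even_odd n : even n -> odd n -> False.
Proof.
  intros [h Hh] [k Hk]. subst. destruct (classic (h <=' k)) as [H1|H1].
  - apply sub_ex in H1. destruct H1 as [d Hd]. subst.
    apply (lt_neq (h +' h) ((h +' d) +' (h +' d) +' o1)); auto.
    apply lt_ex. exists (d +' d). ring.
  - apply nle_lt in H1. apply lt_ex in H1. destruct H1 as [d Hd]. subst.
    apply (lt_neq (k +' k +' o1) ((k +' d +' o1) +' (k +' d +' o1))); auto.
    apply lt_ex. exists (d +' d). ring.
Qed.


Lemma mul_le_l d m P : d *' m = P -> P <> z0 -> d <=' P.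
Proof.
  intros H HP. destruct (zero_or_S m) as [Hm|[m' Hm]]; subst.
  - exfalso; apply HP; rewrite A5; auto.
  - rewrite A6, add_comm. apply le_add.
Qed.

Lemma mul_le_r d m P : d *' m = P -> P <> z0 -> m <=' P.
Proof. intros H HP. rewrite mul_comm in H. eapply mul_le_l; eauto. Qed.

Definition Pow P := P <> z0 /\ forall d m, d *' m = P -> d = o1 \/ even d.

Definition fPow (p : term) : form :=
  fand (fnot (feq p tzero)) (fball (tplus p tone) (fball (tplus (sh p) tone)
    (fimp (feq (ttimes (tvar 1) (tvar 0)) (sh (sh p)))
      (f_or (feq (tvar 1) tone) (fbex (tplus (tvar 1) tone) (feq (tvar 2) (tplus (tvar 0) (tvar 0)))))))).
Arguments fPow : simpl never.

Lemma Bounded_fPow p : Bounded (fPow p).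
Proof. unfold fPow; repeat constructor. Qed.

Lemma sat_fPow e E p : sat M e E (fPow p) <-> Pow (evalt M e p).
Proof.
  unfold fPow, Pow; simpl. repeat setoid_rewrite evalt_sh. split.
  - intros [H1 H2]. split; auto. intros d m Hdm.
    destruct (H2 d (le_lt_S _ _ (mul_le_l _ _ _ Hdm H1)) m (le_lt_S _ _ (mul_le_r _ _ _ Hdm H1)) Hdm) as [H|[h [_ H]]]; auto.
    right; exists h; auto.
  - intros [H1 H2]. split; auto. intros d _ m _ Hdm. destruct (H2 d m Hdm) as [H|[h H]]; auto.
    right; exists h; split; auto. apply le_lt_S. rewrite H. apply le_add.
Qed.

Opaque fPow.
Ltac satsimp ::= simpl; repeat (setoid_rewrite sat_fPow); simpl.
Ltac bnd ::= repeat (apply Bounded_fPow || constructor).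

Lemma Pow_pos P : Pow P -> z0 <' P.
Proof. intros [H _]. destruct (le_0 P) as [H1|H1]; auto. subst; tauto. Qed.

Lemma Pow_1 : Pow o1.
Proof.
  split; [apply one_neq_zero|]. intros d m H. left. apply le_antisym.
  - eapply mul_le_l; eauto. apply one_neq_zero.
  - destruct (le_0 d) as [H1|H1]; [apply lt_le_S in H1; rewrite add_0_l in H1; auto|].
    subst. rewrite mul_0_l in H. exfalso; apply one_neq_zero; auto.
Qed.

Lemma odd_mul a b : odd a -> odd b -> odd (a *' b).
Proof. intros [h Hh] [k Hk]; subst. exists (h *' k +' h *' k +' h +' k). ring. Qed.

Lemma Pow_double P : Pow P -> Pow (P +' P).
Proof.
  intros [H1 H2]. split.
  - intro H. apply H1. apply le_antisym; [|apply le_0]. rewrite <- H. apply le_add.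
  - intros d m H. destruct (parity d) as [Hd|Hd]; auto.
    destruct (parity m) as [[m' Hm]|Hm].
    + subst. assert (H3 : d *' m' = P). { apply double_inj. rewrite <- H. ring. }
      apply (H2 d m' H3).
    + exfalso. apply (even_odd (d *' m)); [exists P; auto|apply odd_mul; auto].
Qed.

Lemma Pow_half P : Pow P -> P <> o1 -> exists Q, P = Q +' Q /\ Pow Q.
Proof.
  intros [H1 H2] Hne. destruct (H2 P o1) as [H|[Q HQ]]; [ring| tauto |].
  exists Q. split; auto. split.
  - intro H; subst. apply H1. ring.
  - intros d m H. apply (H2 d (m +' m)). rewrite HQ, <- H. ring.
Qed.


Lemma half_lt Q : z0 <' Q -> Q <' Q +' Q.
Proof. intro H. apply pos_S in H. destruct H as [q Hq]. subst. apply lt_ex. exists q. ring. Qed.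

Lemma double_lt h k : h <' k -> h +' h <' k +' k.
Proof. intro H. eapply lt_trans; [apply lt_add_r; eauto|apply lt_add_l; eauto]. Qed.

Lemma Pow_double_gt1 P : Pow P -> o1 <' P +' P.
Proof.
  intro H. apply Pow_pos in H. apply (le_lt_trans _ P).
  - apply lt_le_S in H. rewrite add_0_l in H. exact H.
  - apply half_lt; auto.
Qed.

Lemma Pow_mul P Q : Pow P -> Pow Q -> Pow (P *' Q).
Proof.
  intro HP. revert Q.
  sinduct (fimp (fPow (tvar 0)) (fPow (ttimes (tvar 1) (tvar 0)))) (scons P e0).
  - intros Q IH HQ. destruct (classic (Q = o1)) as [E|E].
    + subst. rewrite mul_comm, mul_1_l. auto.
    + destruct (Pow_half Q HQ E) as [Q' [HQ' HQ'p]]. subst.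
      replace (P *' (Q' +' Q')) with (P *' Q' +' P *' Q') by ring.
      apply Pow_double. apply IH; auto. apply half_lt. apply Pow_pos; auto.
Qed.

Lemma Pow_div_aux N0 : forall P, forall R, R <' N0 +' o1 -> Pow P -> Pow R -> (P <' R \/ P = R) ->
   exists Q, Q <' R +' o1 /\ (R = P *' Q /\ Pow Q).
Proof.
  sinduct (fball (tplus (tvar 1) tone) (fimp (fPow (tvar 1)) (fimp (fPow (tvar 0)) (fimp (fle (tvar 1) (tvar 0))
     (fbex (tplus (tvar 0) tone) (fand (feq (tvar 1) (ttimes (tvar 2) (tvar 0))) (fPow (tvar 0)))))))) (scons N0 e0).
  intros P IH R HR HP HPR HPR'. destruct (classic (P = o1)) as [E|E].
  + subst. exists R. split; [apply lt_S|]. split; auto. rewrite mul_1_l; auto.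
  + destruct (Pow_half P HP E) as [P' [HP' HP'p]]. subst.
    assert (ER : R <> o1).
    { intro ER; subst. apply (lt_nle _ _ (Pow_double_gt1 _ HP'p)). exact HPR'. }
    destruct (Pow_half R HPR ER) as [R' [HR' HR'p]]. subst.
    assert (H1 : P' <' R' \/ P' = R').
    { apply nlt_le. intro H. apply (lt_nle _ _ (double_lt _ _ H)). exact HPR'. }
    assert (H2 : R' <' N0 +' o1).
    { eapply le_lt_trans; [|exact HR]. apply le_add. }
    destruct (IH P' (half_lt _ (Pow_pos _ HP'p)) R' H2 HP'p HR'p H1) as [Q [HQ1 [HQ2 HQ3]]].
    exists Q. split; [|split; auto].
    * apply le_lt_S. eapply le_trans; [apply lt_S_le; exact HQ1|apply le_add].
    * rewrite HQ2. ring.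
Qed.



Lemma Pow_div P R : Pow P -> Pow R -> P <=' R -> exists Q, R = P *' Q /\ Pow Q.
Proof.
  intros HP HR HPR. destruct (Pow_div_aux R P R (lt_S R) HP HR HPR) as [Q [_ HQ]]. exists Q; auto.
Qed.


Lemma Pow_exists n : exists P, Pow P /\ n <' P.
Proof.
  revert n. induct (fex (fand (fPow (tvar 0)) (flt (tvar 1) (tvar 0)))) e0.
  - exists o1. split; [apply Pow_1|apply lt_0_1].
  - intros n [P [HP Hn]]. exists (P +' P). split; [apply Pow_double; auto|].
    apply (le_lt_trans _ P); [apply lt_le_S; auto|apply half_lt; apply Pow_pos; auto].
Qed.

Lemma div_ex P q : z0 <' P -> exists u r, q = u *' P +' r /\ r <' P.
Proof.
  intro HP. assert (H : exists u, u <' q +' o1 /\ exists r, r <' P /\ q = u *' P +' r).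
  { revert q. induct (fbex (tplus (tvar 0) tone) (fbex (tvar 2) (feq (tvar 2) (tplus (ttimes (tvar 1) (tvar 3)) (tvar 0))))) (scons P e0).
    - exists z0. split; [apply lt_0_S|]. exists z0. split; auto. rewrite mul_0_l, A3; auto.
    - intros q [u [Hu [r [Hr Hq]]]]. apply lt_le_S in Hr. destruct Hr as [Hr|Hr].
      + exists u. split; [eapply lt_trans; [exact Hu|apply lt_S]|]. exists (r +' o1). split; auto. rewrite Hq; ring.
      + exists (u +' o1). split; [apply lt_S_mono; auto|]. exists z0. split; auto. rewrite Hq, <- Hr. ring. }
  destruct H as [u [_ [r [Hr Hq]]]]. exists u, r; auto.
Qed.

Lemma div_unique P u r u' r' : u *' P +' r = u' *' P +' r' -> r <' P -> r' <' P -> u = u' /\ r = r'.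
Proof.
  intros H Hr Hr'.
  assert (Hu : u = u').
  { destruct (trich u u') as [H1|[H1|H1]]; auto; exfalso; apply lt_ex in H1; destruct H1 as [d Hd]; subst.
    - apply (lt_neq (u *' P +' r) ((u +' d +' o1) *' P +' r')); auto.
      apply (lt_le_trans _ (u *' P +' P)); [apply lt_add_l; auto|].
      replace ((u +' d +' o1) *' P +' r') with (u *' P +' P +' (d *' P +' r')) by ring. apply le_add.
    - apply (lt_neq (u' *' P +' r') ((u' +' d +' o1) *' P +' r)); auto.
      apply (lt_le_trans _ (u' *' P +' P)); [apply lt_add_l; auto|].
      replace ((u' +' d +' o1) *' P +' r) with (u' *' P +' P +' (d *' P +' r)) by ring. apply le_add. }
  subst. split; auto. eapply add_cancel_l; eauto.
Qed.

Lemma mul_ge_l u P : z0 <' P -> u <=' u *' P.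
Proof. intro H. apply pos_S in H. destruct H as [p Hp]. subst. rewrite A6, add_comm. apply le_add. Qed.

Definition DigitU (B q P t : N) := exists u r w, q = u *' P +' r /\ r <' P /\ u = w *' B +' t /\ t <' B.

Lemma Digit_unique B q P t t' : DigitU B q P t -> DigitU B q P t' -> t = t'.
Proof.
  intros [u [r [w [H1 [H2 [H3 H4]]]]]] [u' [r' [w' [H1' [H2' [H3' H4']]]]]].
  rewrite H1 in H1'. destruct (div_unique _ _ _ _ _ H1' H2 H2') as [E1 _]. rewrite E1, H3' in H3.
  destruct (div_unique _ _ _ _ _ H3 H4' H4) as [_ E2]. auto.
Qed.

Lemma Digit_exists B q P : z0 <' P -> z0 <' B -> exists t, DigitU B q P t.
Proof.
  intros HP HB'. destruct (div_ex P q HP) as [u [r [H1 H2]]]. destruct (div_ex B u HB') as [w [t [H3 H4]]].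
  exists t, u, r, w. auto.
Qed.

Lemma Digit_le B q P t : DigitU B q P t -> t <=' q.
Proof.
  intros [u [r [w [H1 [H2 [H3 H4]]]]]]. subst.
  assert (HB' : z0 <' B) by (eapply le_lt_trans; [apply le_0|exact H4]).
  assert (HP : z0 <' P) by (eapply le_lt_trans; [apply le_0|exact H2]).
  eapply le_trans; [|apply le_add]. eapply le_trans; [|apply mul_ge_l; auto].
  rewrite add_comm. apply le_add.
Qed.

Lemma Digit_high B q P t d m : DigitU B q P t -> DigitU B (q +' d *' (P *' B *' m)) P t.
Proof.
  intros [u [r [w [H1 [H2 [H3 H4]]]]]]. exists (u +' d *' B *' m), r, (w +' d *' m).
  subst. split; [ring|split; auto]. split; [ring|auto].
Qed.

Lemma Digit_top B q R d : q <' R -> d <' B -> DigitU B (q +' d *' R) R d.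
Proof.
  intros H1 H2. exists d, q, z0. split; [ring|split; auto]. split; [ring|auto].
Qed.

Definition fDigit (b q p t : term) : form :=
  fbex (tplus q tone) (fbex (sh p) (fbex (tplus (sh (sh q)) tone)
   (fand (feq (sh (sh (sh q))) (tplus (ttimes (tvar 2) (sh (sh (sh p)))) (tvar 1)))
   (fand (feq (tvar 2) (tplus (ttimes (tvar 0) (sh (sh (sh b)))) (sh (sh (sh t)))))
         (flt (sh (sh (sh t))) (sh (sh (sh b)))))))).

Lemma Bounded_fDigit b q p t : Bounded (fDigit b q p t).
Proof. unfold fDigit; repeat constructor. Qed.

Lemma sat_fDigit e E b q p t : sat M e E (fDigit b q p t) <-> DigitU (evalt M e b) (evalt M e q) (evalt M e p) (evalt M e t).
Proof.
  unfold fDigit, DigitU; simpl. repeat setoid_rewrite evalt_sh. split.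
  - intros [u [_ [r [Hr [w [_ H]]]]]]. exists u, r, w. tauto.
  - intros [u [r [w [H1 [H2 [H3 H4]]]]]].
    assert (HB' : z0 <' evalt M e b) by (eapply le_lt_trans; [apply le_0|exact H4]).
    assert (HP : z0 <' evalt M e p) by (eapply le_lt_trans; [apply le_0|exact H2]).
    assert (Hu : u <=' evalt M e q) by (rewrite H1; eapply le_trans; [apply mul_ge_l; eauto|apply le_add]).
    exists u. split; [apply le_lt_S; auto|]. exists r. split; auto. exists w. split; [|tauto].
    apply le_lt_S. eapply le_trans; [|exact Hu]. rewrite H3. eapply le_trans; [apply (mul_ge_l w _ HB')|apply le_add].
Qed.

Opaque fDigit.

Definition PowB (B' P : N) := Pow P /\ exists t, t <' P +' o1 /\ P = t *' B' +' o1.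

Definition fPowB (b' p : term) : form :=
  fand (fPow p) (fbex (tplus p tone) (feq (sh p) (tplus (ttimes (tvar 0) (sh b')) tone))).

Lemma Bounded_fPowB b' p : Bounded (fPowB b' p).
Proof. unfold fPowB; repeat (apply Bounded_fPow || constructor). Qed.

Lemma sat_fPowB e E b' p : sat M e E (fPowB b' p) <-> PowB (evalt M e b') (evalt M e p).
Proof. unfold fPowB, PowB; simpl. rewrite sat_fPow. repeat setoid_rewrite evalt_sh. reflexivity. Qed.

Opaque fPowB.

Definition tpair (a b : term) : term := tplus (ttimes (tplus a b) (tplus a b)) a.

Definition BitU (b s q P x y : N) (F : SetT M) :=
  exists t, t <' q +' o1 /\ (DigitU b q P t /\ (t <' o1 +' o1 /\ exists j, j <' s +' o1 /\ (DigitU b s P j /\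
    ((t = o1 /\ mem M (pair M (pair M j (pair M x y)) o1) F) \/ (t = z0 /\ ~ mem M (pair M (pair M j (pair M x y)) o1) F))))).

Definition fBit (b s q p x y : term) : form :=
  fbex (tplus q tone) (fand (fDigit (sh b) (sh q) (sh p) (tvar 0)) (fand (flt (tvar 0) (tplus tone tone))
   (fbex (tplus (sh s) tone) (fand (fDigit (sh (sh b)) (sh (sh s)) (sh (sh p)) (tvar 0))
     (f_or (fand (feq (tvar 1) tone) (fmem (tpair (tpair (tvar 0) (tpair (sh (sh x)) (sh (sh y)))) tone) 0))
           (fand (feq (tvar 1) tzero) (fnot (fmem (tpair (tpair (tvar 0) (tpair (sh (sh x)) (sh (sh y)))) tone) 0)))))))).

Lemma Bounded_fBit b s q p x y : Bounded (fBit b s q p x y).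
Proof. unfold fBit; repeat (apply Bounded_fDigit || constructor). Qed.

Lemma sat_fBit e E b s q p x y : sat M e E (fBit b s q p x y) <->
  BitU (evalt M e b) (evalt M e s) (evalt M e q) (evalt M e p) (evalt M e x) (evalt M e y) (E 0).
Proof. unfold fBit, BitU; simpl. repeat setoid_rewrite sat_fDigit. simpl. repeat setoid_rewrite evalt_sh. reflexivity. Qed.

Opaque fBit.

Definition CodeU (b b' s pl q x y : N) (F : SetT M) :=
  q <' pl *' b /\ forall P, P <' pl +' o1 -> PowB b' P -> BitU b s q P x y F.

Definition fCode (b b' s pl q x y : term) : form :=
  fand (flt q (ttimes pl b)) (fball (tplus pl tone) (fimp (fPowB (sh b') (tvar 0)) (fBit (sh b) (sh s) (sh q) (tvar 0) (sh x) (sh y)))).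

Lemma Bounded_fCode b b' s pl q x y : Bounded (fCode b b' s pl q x y).
Proof. unfold fCode; repeat (apply Bounded_fPowB || apply Bounded_fBit || constructor). Qed.

Lemma sat_fCode e E b b' s pl q x y : sat M e E (fCode b b' s pl q x y) <->
  CodeU (evalt M e b) (evalt M e b') (evalt M e s) (evalt M e pl) (evalt M e q) (evalt M e x) (evalt M e y) (E 0).
Proof. unfold fCode, CodeU; simpl. repeat setoid_rewrite sat_fPowB. repeat setoid_rewrite sat_fBit. simpl. repeat setoid_rewrite evalt_sh. reflexivity. Qed.

Opaque fCode.

Ltac satsimp ::= simpl; repeat (setoid_rewrite sat_fPow || setoid_rewrite sat_fDigit || setoid_rewrite sat_fPowB || setoid_rewrite sat_fBit || setoid_rewrite sat_fCode); simpl.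
Ltac bnd ::= repeat (apply Bounded_fPow || apply Bounded_fDigit || apply Bounded_fPowB || apply Bounded_fBit || apply Bounded_fCode || constructor).

Section PB.
Variable B' : N.
Variable B : N.
Hypothesis HBB : B = B' +' o1.
Hypothesis HPowB : Pow B.
Hypothesis HB'pos : z0 <' B'.

Lemma B_gt1 : o1 <' B.
Proof. rewrite HBB. destruct (pos_S _ HB'pos) as [p Hp]. rewrite Hp. apply lt_ex. exists p. ring. Qed.

Lemma B_pos : z0 <' B.
Proof. eapply lt_trans; [apply lt_0_1|apply B_gt1]. Qed.

Lemma PowB_1 : PowB B' o1.
Proof. split; [apply Pow_1|]. exists z0. split; [apply lt_0_S|]. ring. Qed.

Lemma PowB_pos P : PowB B' P -> z0 <' P.
Proof. intros [H _]. apply Pow_pos; auto. Qed.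

Lemma PowB_mul P : PowB B' P -> PowB B' (P *' B).
Proof.
  intros [HP [t [Ht HPt]]]. split; [apply Pow_mul; auto|].
  exists (t *' B +' o1). split; [|rewrite HBB, HPt; ring].
  apply le_lt_S. 
  assert (H1 : t <' P). { rewrite HPt. apply (lt_le_trans _ (t +' o1)); [apply lt_S|]. apply le_add_r. apply mul_ge_l; auto. }
  apply lt_le_S in H1. apply (le_mul_r _ _ B) in H1. eapply le_trans; [|exact H1].
  rewrite mul_distr_r, mul_1_l. apply le_add_l. pose proof B_pos as HBp. apply lt_le_S in HBp. rewrite add_0_l in HBp. exact HBp.
Qed.


Lemma PowB_gap P R : PowB B' P -> PowB B' R -> P <' R -> exists m, R = P *' B *' m.
Proof.
  intros [HP [t [_ Ht]]] [HR [u [_ Hu]]] HPR.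
  destruct (Pow_div P R HP HR (or_introl HPR)) as [Q [HQ HQp]].
  destruct (pos_S _ (Pow_pos _ HQp)) as [Q' HQ'].
  assert (E1 : u *' B' = t *' B' *' Q +' Q').
  { apply A2. rewrite <- Hu, HQ, Ht, HQ'. ring. }
  assert (E2 : t *' Q <=' u).
  { apply nlt_le. intro H. apply (lt_mul_r _ _ B') in H; auto.
    apply (lt_nle _ _ H). rewrite E1. replace (t *' B' *' Q) with (t *' Q *' B') by ring. apply le_add. }
  apply sub_ex in E2. destruct E2 as [w Hw].
  assert (E3 : Q' = w *' B').
  { apply (add_cancel_l _ _ (t *' B' *' Q)). rewrite <- E1, Hw. ring. }
  assert (Hw0 : z0 <' w).
  { destruct (le_0 w) as [H|H]; auto. exfalso. subst w. rewrite mul_0_l in E3. subst Q'.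
    rewrite add_0_l in HQ'. subst Q. rewrite mul_comm, mul_1_l in HQ. rewrite HQ in HPR. eapply lt_irrefl; eauto. }
  assert (HBQ : B <=' Q).
  { rewrite HQ', E3, HBB. apply le_add_r. rewrite mul_comm. apply mul_ge_l; auto. }
  destruct (Pow_div B Q HPowB HQp HBQ) as [m [Hm _]].
  exists m. rewrite HQ, Hm. ring.
Qed.

Lemma PowB_next P R : PowB B' P -> PowB B' R -> P <' R -> P *' B <=' R.
Proof.
  intros HP HR HPR. destruct (PowB_gap P R HP HR HPR) as [m Hm].
  rewrite Hm. apply mul_ge_l. destruct (le_0 m) as [H|H]; auto. rewrite <- H in Hm.
  exfalso. apply (lt_irrefl z0). rewrite A5 in Hm. rewrite <- Hm at 2. apply (PowB_pos R HR).
Qed.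

Lemma lt_mul_B P : z0 <' P -> P <' P *' B.
Proof.
  intro H. apply (lt_le_trans _ (P *' (o1 +' o1))).
  - replace (P *' (o1 +' o1)) with (P +' P) by ring. apply half_lt; auto.
  - rewrite (mul_comm P), (mul_comm P). apply le_mul_r. apply lt_le_S. apply B_gt1.
Qed.

Lemma PowB_below P Q : PowB B' P -> PowB B' Q -> P <' Q *' B -> P <=' Q.
Proof.
  intros HP HQ H. apply nlt_le. intro H1. apply (lt_nle _ _ H). apply PowB_next; auto.
Qed.

Lemma PowB_ge1 P : PowB B' P -> o1 <=' P.
Proof. intro H. apply PowB_pos in H. apply lt_le_S in H. rewrite add_0_l in H. exact H. Qed.


Lemma Digit_lift q P R d t : PowB B' P -> PowB B' R -> P <' R -> DigitU B q P t -> DigitU B (q +' d *' R) P t.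
Proof.
  intros HP HR HPR H. destruct (PowB_gap P R HP HR HPR) as [m Hm]. rewrite Hm. apply Digit_high; auto.
Qed.

Lemma Digit_lower q P R d t : PowB B' P -> PowB B' R -> P <' R -> DigitU B (q +' d *' R) P t -> DigitU B q P t.
Proof.
  intros HP HR HPR H. destruct (Digit_exists B q P (PowB_pos P HP) B_pos) as [t0 Ht0].
  assert (H1 := Digit_lift q P R d t0 HP HR HPR Ht0).
  rewrite (Digit_unique _ _ _ _ _ H H1). auto.
Qed.

Lemma Digit_at1 v : v <' B -> DigitU B v o1 v.
Proof.
  intro H. assert (H1 := Digit_top B z0 o1 v lt_0_1 H). rewrite add_0_l, mul_comm, mul_1_l in H1. exact H1.
Qed.

Lemma top_bound q R d : q <' R -> d +' o1 <' B +' o1 -> q +' d *' R <' R *' B.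
Proof.
  intros H1 H2. apply (lt_le_trans _ (R +' d *' R)); [apply lt_add_r; auto|].
  replace (R +' d *' R) with ((d +' o1) *' R) by ring. rewrite (mul_comm R B). apply le_mul_r.
  apply lt_S_le. auto.
Qed.

Definition RulerBody s Pl k :=
  PowB B' Pl /\ s <' Pl *' B /\ DigitU B s Pl k /\ DigitU B s o1 z0 /\
  (forall P, P <' Pl -> PowB B' P -> forall t, t <' s +' o1 -> DigitU B s P t -> DigitU B s (P *' B) (t +' o1)) /\
  (forall P, P <' Pl +' o1 -> PowB B' P -> forall t, t <' s +' o1 -> DigitU B s P t -> t <' k +' o1 /\ (t = k -> P = Pl)).

Lemma ruler_ex a : a +' o1 <' B -> exists s Pl, RulerBody s Pl a.
Proof.
  intro Ha.
  assert (H : forall k, exists m, a <' k \/ exists s, s <' m /\ exists Pl, Pl <' m /\ RulerBody s Pl k).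
  { unfold RulerBody.
    induct (fex (f_or (flt (tvar 2) (tvar 1)) (fbex (tvar 0) (fbex (tvar 1)
      (fand (fPowB (tvar 6) (tvar 0))
      (fand (flt (tvar 1) (ttimes (tvar 0) (tvar 5)))
      (fand (fDigit (tvar 5) (tvar 1) (tvar 0) (tvar 3))
      (fand (fDigit (tvar 5) (tvar 1) tone tzero)
      (fand (fball (tvar 0)
          (fimp (fPowB (tvar 7) (tvar 0))
            (fball (tplus (tvar 2) tone)
              (fimp (fDigit (tvar 7) (tvar 3) (tvar 1) (tvar 0))
                    (fDigit (tvar 7) (tvar 3) (ttimes (tvar 1) (tvar 7)) (tplus (tvar 0) tone))))))
        (fball (tplus (tvar 0) tone)
          (fimp (fPowB (tvar 7) (tvar 0))
            (fball (tplus (tvar 2) tone)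
              (fimp (fDigit (tvar 7) (tvar 3) (tvar 1) (tvar 0))
                  (fand (flt (tvar 0) (tplus (tvar 5) tone))
                        (fimp (feq (tvar 0) (tvar 5)) (feq (tvar 1) (tvar 2)))))))))))))))))
      (scons a (scons B (scons B' e0))).
    - exists (o1 +' o1). right. exists z0. split; [apply lt_0_S|]. exists o1.
      split; [rewrite <- (add_0_l o1) at 1; apply lt_S_mono; apply lt_0_1|].
      assert (D0 : DigitU B z0 o1 z0) by (apply Digit_at1; apply B_pos).
      split; [apply PowB_1|]. split; [rewrite mul_1_l; apply B_pos|]. split; [auto|]. split; [auto|]. split.
      + intros P HP HPB. exfalso. apply (lt_nle _ _ HP). apply PowB_ge1; auto.
      + intros P HP HPB t _ Ht.
        assert (HP1 : P = o1) by (apply le_antisym; [apply lt_S_le; auto|apply PowB_ge1; auto]).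
        subst P. rewrite (Digit_unique _ _ _ _ _ Ht D0). split; [apply lt_0_S|auto].
    - intros k [m IH]. destruct (classic (a <' k +' o1)) as [Hak|Hak].
      { exists z0; left; auto. }
      apply nlt_le in Hak. destruct IH as [IH|[s [_ [Pl [_ [H1 [H2 [H3 [H4 [H5 H6]]]]]]]]]].
      { exfalso. apply (lt_nle _ _ IH). eapply le_trans; [apply le_add|exact Hak]. }
      assert (HkB : k +' o1 +' o1 <' B +' o1).
      { apply lt_S_mono. eapply le_lt_trans; [exact Hak|]. eapply lt_trans; [apply lt_S|exact Ha]. }
      set (Pl' := Pl *' B). set (s' := s +' (k +' o1) *' Pl').
      assert (HPl' : PowB B' Pl') by (apply PowB_mul; auto).
      assert (HPlPl' : Pl <' Pl') by (apply lt_mul_B; apply PowB_pos; auto).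
      assert (Hbelow : forall P, PowB B' P -> P <' Pl' -> P <=' Pl) by (intros; apply PowB_below; auto).
      assert (Hlow : forall P t, PowB B' P -> P <' Pl' -> DigitU B s' P t -> DigitU B s P t).
      { intros P t HP HPl Ht. unfold s' in Ht. apply (Digit_lower s P Pl' (k +' o1) t); auto. }
      assert (Hup : forall P t, PowB B' P -> P <' Pl' -> DigitU B s P t -> DigitU B s' P t).
      { intros P t HP HPl Ht. unfold s'. apply Digit_lift; auto. }
      assert (Htop : DigitU B s' Pl' (k +' o1)).
      { unfold s'. apply Digit_top; auto. apply lt_S_rev; exact HkB. }
      exists (s' +' Pl' +' o1). right. exists s'. split; [apply le_lt_S; apply le_add|].
      exists Pl'. split; [apply le_lt_S; rewrite add_comm; apply le_add|].
      split; [auto|]. split; [apply top_bound; auto|]. split; [auto|]. split.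
      { apply Hup; auto. apply PowB_1. eapply le_lt_trans; [apply PowB_ge1; exact H1|auto]. }
      split.
      + intros P HP HPB t _ Ht. apply Hlow in Ht; auto. assert (HPle := Hbelow P HPB HP).
        destruct HPle as [HPlt|HPeq].
        * apply Hup; [apply PowB_mul; auto| |].
          { apply (le_lt_trans _ Pl); [apply PowB_next; auto|exact HPlPl']. }
          apply H5; auto. apply le_lt_S; eapply Digit_le; eauto.
        * subst P. rewrite (Digit_unique _ _ _ _ _ Ht H3). exact Htop.
      + intros P HP HPB t _ Ht. apply lt_S_le in HP. destruct HP as [HP|HP].
        * apply Hlow in Ht; auto. assert (HPle := Hbelow P HPB HP).
          assert (Ht2 : t <' s +' o1) by (apply le_lt_S; eapply Digit_le; eauto).
          destruct (H6 P (le_lt_S _ _ HPle) HPB t Ht2 Ht) as [Htk _].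
          split; [eapply lt_trans; [exact Htk|apply lt_S]|].
          intro E. subst t. exfalso. eapply lt_irrefl. exact Htk.
        * subst P. rewrite (Digit_unique _ _ _ _ _ Ht Htop). split; [apply lt_S|auto].
  }
  destruct (H a) as [m [Hm|[s [_ [Pl [_ HR]]]]]].
  - exfalso; eapply lt_irrefl; eauto.
  - exists s, Pl; auto.
Qed.


Section Pos.
Variables (a s Pl : N).
Hypothesis Ha : a +' o1 <' B.
Hypothesis HR : RulerBody s Pl a.

Lemma pos_ex i : i <' a +' o1 -> exists P, P <' Pl +' o1 /\ PowB B' P /\ DigitU B s P i.
Proof.
  destruct HR as [H1 [H2 [H3 [H4 [H5 H6]]]]].
  revert i. induct (fimp (flt (tvar 0) (tplus (tvar 1) tone)) (fbex (tplus (tvar 2) tone) (fand (fPowB (tvar 6) (tvar 0)) (fDigit (tvar 5) (tvar 4) (tvar 0) (tvar 1)))))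
    (scons a (scons Pl (scons s (scons B (scons B' e0))))).
  - intros _. exists o1. split; [apply le_lt_S; apply PowB_ge1; auto|]. split; [apply PowB_1|auto].
  - intros i IH Hi. assert (Hi' : i <' a +' o1) by (eapply lt_trans; [apply lt_S|exact Hi]).
    destruct (IH Hi') as [P [HP1 [HP2 HP3]]]. apply lt_S_le in HP1. destruct HP1 as [HP1|HP1].
    + exists (P *' B). split; [apply le_lt_S; apply PowB_next; auto|]. split; [apply PowB_mul; auto|].
      apply H5; auto. apply le_lt_S; eapply Digit_le; eauto.
    + exfalso. subst P. rewrite (Digit_unique _ _ _ _ _ HP3 H3) in Hi. eapply lt_irrefl; eauto.
Qed.

Lemma pos_top P : P <=' Pl -> PowB B' P -> DigitU B s P a -> P = Pl.
Proof.
  destruct HR as [H1 [H2 [H3 [H4 [H5 H6]]]]]. intros HP HPB HD.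
  apply (H6 P (le_lt_S _ _ HP) HPB a (le_lt_S _ _ (Digit_le _ _ _ _ HD)) HD). reflexivity.
Qed.


Definition bitv (j x y : N) : N := if excluded_middle_informative (mem M (pair M (pair M j (pair M x y)) o1) s0) then o1 else z0.

Lemma bitv_spec j x y : (bitv j x y = o1 /\ mem M (pair M (pair M j (pair M x y)) o1) s0) \/
   (bitv j x y = z0 /\ ~ mem M (pair M (pair M j (pair M x y)) o1) s0).
Proof. unfold bitv. destruct (excluded_middle_informative _); auto. Qed.

Lemma bitv_lt2 j x y : bitv j x y <' o1 +' o1.
Proof. unfold bitv. destruct (excluded_middle_informative _). apply lt_S. apply lt_0_S. Qed.

Lemma two_le_B : o1 +' o1 <=' B.
Proof. apply lt_le_S. apply B_gt1. Qed.

Lemma bitv_ltB j x y : bitv j x y <' B.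
Proof. eapply lt_le_trans; [apply bitv_lt2|apply two_le_B]. Qed.

Lemma code_ex x y : exists q, CodeU B B' s Pl q x y s0.
Proof.
  destruct HR as [H1 [H2 [H3 [H4 [H5 H6]]]]].
  assert (H : forall k, exists m, a <' k \/ exists q, q <' m /\ exists Pk, Pk <' m /\
     (PowB B' Pk /\ (Pk <' Pl +' o1 /\ (DigitU B s Pk k /\ (q <' Pk *' B /\
      forall P, P <' Pk +' o1 -> PowB B' P -> BitU B s q P x y s0))))).
  { induct (fex (f_or (flt (tvar 2) (tvar 1)) (fbex (tvar 0) (fbex (tvar 1)
      (fand (fPowB (tvar 8) (tvar 0)) (fand (flt (tvar 0) (tplus (tvar 5) tone))
      (fand (fDigit (tvar 7) (tvar 6) (tvar 0) (tvar 3)) (fand (flt (tvar 1) (ttimes (tvar 0) (tvar 7)))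
      (fball (tplus (tvar 0) tone) (fimp (fPowB (tvar 9) (tvar 0)) (fBit (tvar 8) (tvar 7) (tvar 2) (tvar 0) (tvar 10) (tvar 11))))))))))))
      (scons a (scons Pl (scons s (scons B (scons B' (scons x (scons y e0))))))).
    - exists (B +' o1). right. exists (bitv z0 x y). split; [eapply lt_trans; [apply bitv_ltB|apply lt_S]|].
      exists o1. split; [eapply lt_trans; [apply B_gt1|apply lt_S]|].
      split; [apply PowB_1|]. split; [apply le_lt_S; apply PowB_ge1; auto|]. split; [auto|].
      split; [rewrite mul_1_l; apply bitv_ltB|].
      intros P HP HPB. assert (HP1 : P = o1) by (apply le_antisym; [apply lt_S_le; auto|apply PowB_ge1; auto]). subst P.
      exists (bitv z0 x y). split; [apply lt_S|]. split; [apply Digit_at1; apply bitv_ltB|]. split; [apply bitv_lt2|].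
      exists z0. split; [apply lt_0_S|]. split; [auto|]. apply bitv_spec.
    - intros k [m IH]. destruct (classic (a <' k +' o1)) as [Hak|Hak].
      { exists z0; left; auto. }
      apply nlt_le in Hak. destruct IH as [IH|[q [_ [Pk [_ [K1 [K2 [K3 [K4 K5]]]]]]]]].
      { exfalso. apply (lt_nle _ _ IH). eapply le_trans; [apply le_add|exact Hak]. }
      assert (HPk : Pk <' Pl).
      { apply lt_S_le in K2. destruct K2 as [K2|K2]; auto. exfalso. subst Pk.
        rewrite (Digit_unique _ _ _ _ _ K3 H3) in Hak. apply (lt_nle _ _ (lt_S a)). exact Hak. }
      set (P' := Pk *' B). set (v := bitv (k +' o1) x y). set (q' := q +' v *' P').
      assert (HP' : PowB B' P') by (apply PowB_mul; auto).
      assert (HPkP' : Pk <' P') by (apply lt_mul_B; apply PowB_pos; auto).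
      assert (HDs : DigitU B s P' (k +' o1)).
      { apply H5; auto. apply le_lt_S; eapply Digit_le; eauto. }
      assert (HDq : DigitU B q' P' v) by (apply Digit_top; auto; apply bitv_ltB).
      exists (q' +' P' +' o1). right. exists q'. split; [apply le_lt_S; apply le_add|].
      exists P'. split; [apply le_lt_S; rewrite add_comm; apply le_add|].
      split; [auto|]. split; [apply le_lt_S; apply PowB_next; auto|]. split; [auto|].
      split; [apply top_bound; auto; apply lt_S_mono; apply bitv_ltB|].
      intros P HP HPB. apply lt_S_le in HP. destruct HP as [HP|HP].
      + assert (HPle : P <=' Pk) by (apply PowB_below; auto).
        destruct (K5 P (le_lt_S _ _ HPle) HPB) as [t [_ [Ht1 [Ht2 [j [Hj1 [Hj2 Hj3]]]]]]].
        assert (Ht1' : DigitU B q' P t) by (apply Digit_lift; auto).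
        exists t. split; [apply le_lt_S; eapply Digit_le; eauto|]. split; auto. split; auto.
        exists j. auto.
      + subst P. exists v. split; [apply le_lt_S; eapply Digit_le; eauto|]. split; auto. split; [apply bitv_lt2|].
        exists (k +' o1). split; [apply le_lt_S; eapply Digit_le; eauto|]. split; auto. apply bitv_spec. }
  destruct (H a) as [m [Hm|[q [_ [Pk [_ [K1 [K2 [K3 [K4 K5]]]]]]]]]].
  - exfalso; eapply lt_irrefl; eauto.
  - assert (E : Pk = Pl) by (apply pos_top; auto; apply lt_S_le; auto).
    subst Pk. exists q. split; auto.
Qed.

End Pos.

End PB.


Lemma sq_lt S1 S2 i k : S1 <' S2 -> i <=' S1 -> S1 *' S1 +' i <' S2 *' S2 +' k.
Proof.
  intros H Hi. apply lt_le_S in H.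
  apply (le_lt_trans _ (S1 *' S1 +' S1)); [apply le_add_l; auto|].
  apply (lt_le_trans _ ((S1 +' o1) *' (S1 +' o1))).
  - apply lt_ex. exists S1. ring.
  - eapply le_trans; [|apply le_add]. eapply le_trans; [apply le_mul_r; exact H|].
    rewrite (mul_comm S2 (S1 +' o1)). apply le_mul_r; auto.
Qed.

Lemma pair_inj i j k l : pair M i j = pair M k l -> i = k /\ j = l.
Proof.
  unfold pair. intro H.
  destruct (trich (i +' j) (k +' l)) as [H1|[H1|H1]].
  - exfalso. apply (lt_neq _ _ (sq_lt _ _ i k H1 (le_add i j))); auto.
  - rewrite H1 in H. apply add_cancel_l in H. subst. split; auto. eapply add_cancel_l; eauto.
  - exfalso. apply (lt_neq _ _ (sq_lt _ _ k i H1 (le_add k l))); auto.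
Qed.

Lemma pair_ge_l i j : i <=' pair M i j.
Proof. unfold pair. rewrite add_comm. apply le_add. Qed.

Lemma pair_ge_r i j : j <=' pair M i j.
Proof.
  unfold pair. apply (le_trans _ (i +' j)); [rewrite add_comm; apply le_add|].
  destruct (le_0 (i +' j)) as [H|H].
  - eapply le_trans; [apply (mul_ge_l _ _ H)|apply le_add].
  - rewrite <- H. apply le_0.
Qed.

Definition fG2 : form :=
  fbex (tplus (tvar 0) tone) (fbex (tplus (tvar 1) tone) (fbex (tplus (tvar 2) tone) (fbex (tplus (tvar 3) tone)
   (fand (feq (tvar 4) (tpair (tpair (tvar 3) (tpair (tvar 2) (tvar 1))) (tvar 0)))
     (f_or (fand (feq (tvar 0) tone) (fmem (tpair (tpair (tvar 2) (tvar 1)) (tvar 3)) 0))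
           (fand (feq (tvar 0) tzero) (fnot (fmem (tpair (tpair (tvar 2) (tvar 1)) (tvar 3)) 0)))))))).

Lemma G2_ex : exists G, forall i x y v, mem M (pair M (pair M i (pair M x y)) v) G <->
   ((v = o1 /\ colval M s0 x y i) \/ (v = z0 /\ ~ colval M s0 x y i)).
Proof.
  destruct (HC fG2 (fnot fG2) ltac:(left; unfold fG2; repeat constructor) ltac:(left; unfold fG2; repeat constructor) e0 E0)
    as [G HG].
  { intro n. simpl (sat _ _ _ (fnot _)). split; [tauto|apply NNPP]. }
  exists G. intros i x y v. rewrite HG. unfold fG2, colval. simpl. split.
  - intros [i' [_ [x' [_ [y' [_ [v' [_ [E H]]]]]]]]].
    destruct (pair_inj _ _ _ _ E) as [E1 E2]. destruct (pair_inj _ _ _ _ E1) as [E3 E4].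
    destruct (pair_inj _ _ _ _ E4) as [E5 E6]. subst. exact H.
  - intro H. set (n := pair M (pair M i (pair M x y)) v).
    assert (Hi : i <=' n) by (eapply le_trans; [apply pair_ge_l|apply pair_ge_l]).
    assert (Hxy : pair M x y <=' n) by (eapply le_trans; [apply pair_ge_r|apply pair_ge_l]).
    exists i. split; [apply le_lt_S; auto|]. exists x. split; [apply le_lt_S; eapply le_trans; [apply pair_ge_l|exact Hxy]|].
    exists y. split; [apply le_lt_S; eapply le_trans; [apply pair_ge_r|exact Hxy]|].
    exists v. split; [apply le_lt_S; apply pair_ge_r|]. split; [reflexivity|exact H].
Qed.

Lemma dir1 : EMx M -> forall a, IsColoring M a s0 -> exists X, Infinite M X /\ FallowOn M (colval M s0) X.
Proof.
  intros Hem a [Hc1 Hc2]. destruct G2_ex as [G HG].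
  assert (HGs : IsColoringSeq M a G).
  { intros i Hi. split.
    - intros x y Hxy. destruct (classic (colval M s0 x y i)) as [H|H].
      + exists o1. split; [apply le_refl|]. apply HG. auto.
      + exists z0. split; [apply le_0|]. apply HG. auto.
    - intros x y v w Hxy Hv Hw. apply HG in Hv. apply HG in Hw.
      destruct Hv as [[Hv1 Hv2]|[Hv1 Hv2]]; destruct Hw as [[Hw1 Hw2]|[Hw1 Hw2]]; subst; auto; tauto. }
  destruct (Hem a G HGs) as [X [HX1 HX2]]. exists X. split; auto.
  intros x y z u v w Hx Hy Hz Hxy Hyz Hu Hv Hw.
  assert (Hxz : x <' z) by (eapply lt_trans; eauto).
  destruct (Hc1 x z Hxz) as [w' [Hw'a Hw']]. assert (E := Hc2 x z w w' Hxz Hw Hw'). subst w'.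
  apply NNPP. intro Hne.
  assert (N1 : seqval M G w x y z0).
  { unfold seqval. apply HG. right. split; auto. intro H. apply Hne. left. exact (Hc2 x y w u Hxy H Hu). }
  assert (N2 : seqval M G w y z z0).
  { unfold seqval. apply HG. right. split; auto. intro H. apply Hne. right. exact (Hc2 y z w v Hyz H Hv). }
  assert (N3 := HX2 w Hw'a x y z z0 Hx Hy Hz Hxy Hyz N1 N2).
  unfold seqval in N3. apply HG in N3. destruct N3 as [[N4 _]|[_ N4]].
  - apply one_neq_zero; auto.
  - apply N4; auto.
Qed.


Definition fG : form :=
  fbex (tplus (tvar 0) tone) (fbex (tplus (tvar 1) tone) (fbex (tplus (tvar 2) tone)
   (fand (feq (tvar 3) (tpair (tpair (tvar 2) (tvar 1)) (tvar 0)))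
   (fand (fCode (tvar 4) (tvar 5) (tvar 6) (tvar 7) (tvar 0) (tvar 2) (tvar 1))
         (fball (tvar 0) (fnot (fCode (tvar 5) (tvar 6) (tvar 7) (tvar 8) (tvar 0) (tvar 3) (tvar 2)))))))).

Lemma G_ex B B' s Pl : exists G, forall x y q, mem M (pair M (pair M x y) q) G <->
   (CodeU B B' s Pl q x y s0 /\ forall q', q' <' q -> ~ CodeU B B' s Pl q' x y s0).
Proof.
  assert (Hb : Bounded fG) by (unfold fG; bnd).
  destruct (HC fG (fnot fG) (or_introl Hb) (or_introl (B_not _ Hb)) (scons B (scons B' (scons s (scons Pl e0)))) E0)
    as [G HG].
  { intro n. simpl (sat _ _ _ (fnot _)). split; [tauto|apply NNPP]. }
  exists G. intros x y q. rewrite HG. unfold fG. satsimp. split.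
  - intros [x' [_ [y' [_ [q' [_ [E H]]]]]]].
    destruct (pair_inj _ _ _ _ E) as [E1 E2]. destruct (pair_inj _ _ _ _ E1) as [E3 E4]. subst. exact H.
  - intro H. set (n := pair M (pair M x y) q).
    assert (Hxy : pair M x y <=' n) by apply pair_ge_l.
    exists x. split; [apply le_lt_S; eapply le_trans; [apply pair_ge_l|exact Hxy]|].
    exists y. split; [apply le_lt_S; eapply le_trans; [apply pair_ge_r|exact Hxy]|].
    exists q. split; [apply le_lt_S; apply pair_ge_r|]. split; [reflexivity|exact H].
Qed.

Lemma code_lnp B B' s Pl x y : (exists q, CodeU B B' s Pl q x y s0) ->
  exists q, CodeU B B' s Pl q x y s0 /\ forall q', q' <' q -> ~ CodeU B B' s Pl q' x y s0.
Proof.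
  apply (lnp (fCode (tvar 1) (tvar 2) (tvar 3) (tvar 4) (tvar 0) (tvar 5) (tvar 6)) (Bounded_fCode _ _ _ _ _ _ _)
    (scons B (scons B' (scons s (scons Pl (scons x (scons y e0)))))) E0).
  intro n. rewrite sat_fCode. simpl. reflexivity.
Qed.

Lemma bit_agree B B' s Pl q x y x' y' P i :
  CodeU B B' s Pl q x y s0 -> CodeU B B' s Pl q x' y' s0 -> P <' Pl +' o1 -> PowB B' P -> DigitU B s P i ->
  (seqval M s0 i x y o1 <-> seqval M s0 i x' y' o1).
Proof.
  intros [_ H1] [_ H2] HP HPB HD.
  destruct (H1 P HP HPB) as [t [_ [Ht1 [_ [j [_ [Hj1 Hj2]]]]]]].
  destruct (H2 P HP HPB) as [t' [_ [Ht1' [_ [j' [_ [Hj1' Hj2']]]]]]].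
  rewrite (Digit_unique _ _ _ _ _ Ht1' Ht1) in Hj2'.
  rewrite (Digit_unique _ _ _ _ _ Hj1 HD) in Hj2. rewrite (Digit_unique _ _ _ _ _ Hj1' HD) in Hj2'.
  unfold seqval. pose proof one_neq_zero.
  destruct Hj2 as [[E1 E2]|[E1 E2]]; destruct Hj2' as [[E3 E4]|[E3 E4]]; subst; try tauto; congruence.
Qed.

Lemma seq_transfer a i x y x' y' u : IsColoringSeq M a s0 -> i <=' a -> x <' y -> x' <' y' ->
  (seqval M s0 i x y o1 <-> seqval M s0 i x' y' o1) -> seqval M s0 i x y u -> seqval M s0 i x' y' u.
Proof.
  intros Ha Hi Hxy Hxy' Hag Hu. destruct (Ha i Hi) as [Hc1 Hc2].
  destruct (Hc1 x y Hxy) as [v [Hv1 Hv2]]. assert (E := Hc2 x y u v Hxy Hu Hv2). subst v.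
  destruct (Hc1 x' y' Hxy') as [w [Hw1 Hw2]].
  destruct (le_1_cases _ Hv1) as [E|E]; subst u.
  - destruct (le_1_cases _ Hw1) as [E|E]; subst w; auto.
    exfalso. apply Hag in Hw2. pose proof (Hc2 x y _ _ Hxy Hu Hw2). apply one_neq_zero; auto.
  - apply Hag in Hu. auto.
Qed.

Lemma dir2 : fEMfin M -> forall a, IsColoringSeq M a s0 -> exists X, Infinite M X /\
   forall i, le M i a -> TransitiveOn M (seqval M s0 i) X.
Proof.
  intros Hf a Ha.
  destruct (Pow_exists (a +' o1)) as [B [HBp HaB]].
  assert (HB1 : o1 <' B).
  { eapply le_lt_trans; [|exact HaB]. rewrite add_comm. apply le_add. }
  destruct (pos_S B (lt_trans _ _ _ lt_0_1 HB1)) as [B' HBB].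
  assert (HB'pos : z0 <' B').
  { destruct (le_0 B') as [H|H]; auto. exfalso. subst. rewrite add_0_l in HB1. eapply lt_irrefl; eauto. }
  destruct (ruler_ex B' B HBB HBp HB'pos a HaB) as [s [Pl HR]].
  destruct (G_ex B B' s Pl) as [G HG].
  assert (HGc : IsColoring M (Pl *' B) G).
  { split.
    - intros x y _. destruct (code_lnp B B' s Pl x y (code_ex B' B HBB HBp HB'pos a s Pl HR x y)) as [q [Hq1 Hq2]].
      exists q. split; [left; apply Hq1|]. apply HG. auto.
    - intros x y v w _ Hv Hw. apply HG in Hv. apply HG in Hw.
      destruct (trich v w) as [H|[H|H]]; auto; exfalso.
      + apply (proj2 Hw v H). apply Hv.
      + apply (proj2 Hv w H). apply Hw. }
  destruct (Hf (Pl *' B) G HGc) as [X [HX1 HX2]]. exists X. split; auto.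
  intros i Hi x y z u Hx Hy Hz Hxy Hyz Hu1 Hu2.
  assert (Hxz : x <' z) by (eapply lt_trans; eauto).
  destruct HGc as [Hc1 Hc2].
  destruct (Hc1 x y Hxy) as [q1 [_ Hq1]]. destruct (Hc1 y z Hyz) as [q2 [_ Hq2]]. destruct (Hc1 x z Hxz) as [q3 [_ Hq3]].
  destruct (pos_ex B' B HBB HBp HB'pos a s Pl HR i (le_lt_S _ _ Hi)) as [P [HP1 [HP2 HP3]]].
  destruct (HX2 x y z q1 q2 q3 Hx Hy Hz Hxy Hyz Hq1 Hq2 Hq3) as [E|E]; subst q3.
  - apply HG in Hq1. apply HG in Hq3.
    assert (Hag := bit_agree B B' s Pl q1 x y x z P i (proj1 Hq1) (proj1 Hq3) HP1 HP2 HP3).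
    apply (seq_transfer a i x y x z u Ha Hi Hxy Hxz Hag Hu1).
  - apply HG in Hq2. apply HG in Hq3.
    assert (Hag := bit_agree B B' s Pl q2 y z x z P i (proj1 Hq2) (proj1 Hq3) HP1 HP2 HP3).
    apply (seq_transfer a i y z x z u Ha Hi Hyz Hxz Hag Hu2).
Qed.

End Arith.
Theorem mainTheorem4 :
  forall M : L2structure, RCA0model M -> (EMx M <-> fEMfin M).
Proof.
  intros M [HB [HI HC]]. split.
  - intros H a F HF. exact (dir1 M HB HI HC F H a HF).
  - intros H a F HF. exact (dir2 M HB HI HC F H a HF).
Qed.
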